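(* Let $R$ be a ring. Then $R$ is D-regularly nil clean if, and only if, the quotient ring $R/J(R)$ is D-regularly nil clean and the Jacobson radical $J(R)$ is a nil ideal.
   Context: All rings are associative with identity $1\neq 0$. $Id(R)$ denotes the set of idempotents of $R$, $Nil(R)$ the set of nilpotent elements, $J(R)$ the Jacobson radical. A ring $R$ is called D-regularly nil clean if for each $a\in R$ there exists an idempotent $e\in aRa\cap Id(R)$ such that $a(1-e)\in Nil(R)$. *)

(* Defs.v *)
From HB Require Import structures.
From mathcomp Require Import all_boot all_algebra.
Set Implicit Arguments. Unset Strict Implicit. Unset Printing Implicit Defensive.
Import GRing.Theory.
Local Open Scope ring_scope.

Definition is_idem (R : nzRingType) (e : R) : Prop := e * e = e.
Definition is_nil (R : nzRingType) (x : R) : Prop := exists n : nat, x ^+ n = 0.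
Definition in_aRa (R : nzRingType) (a e : R) : Prop := exists r : R, e = a * r * a.

Definition DRNC (R : nzRingType) : Prop :=
  forall a : R, exists e : R, in_aRa a e /\ is_idem e /\ is_nil (a * (1 - e)).

Definition jacobson (R : nzRingType) (x : R) : Prop :=
  forall r : R, exists y : R, y * (1 - r * x) = 1 /\ (1 - r * x) * y = 1.

Definition jacobson_nil (R : nzRingType) : Prop :=
  forall x : R, jacobson x -> is_nil x.

(* Congruence modulo J(R): x̄ = ȳ in R/J(R). *)
Definition eqJ (R : nzRingType) (x y : R) : Prop := jacobson (x - y).

(* R/J(R) is D-regularly nil clean, written out on representatives:
   every class ā has a class ē with ē ∈ āR̄ā, ē² = ē, and ā(1̄-ē) nilpotent. *)
Definition DRNC_mod_J (R : nzRingType) : Prop :=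
  forall a : R, exists e : R,
    (exists r : R, eqJ e (a * r * a)) /\
    eqJ (e * e) e /\
    (exists n : nat, eqJ ((a * (1 - e)) ^+ n) 0).

(* Main.v *)
Require Import Defs.
From HB Require Import structures.
From mathcomp Require Import all_boot all_algebra.
From mathcomp Require Import ring.
Import GRing.Theory.
Set Implicit Arguments.
Local Open Scope ring_scope.
Section S.
Variable R : nzRingType.
Implicit Types x y r t u : R.

Lemma J0 : jacobson (0:R).
Proof. by move=> r; exists 1; rewrite mulr0 subr0 mul1r. Qed.

Lemma JmulL x t : jacobson x -> jacobson (t * x).
Proof. by move=> Hx r; rewrite mulrA. Qed.

Lemma JN x : jacobson x -> jacobson (- x).
Proof. by move=> Hx r; rewrite mulrN -mulNr. Qed.

Lemma JD x y : jacobson x -> jacobson y -> jacobson (x + y).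
Proof.
move=> Hx Hy r; have [u [u1 u2]] := Hx r.
have [v [v1 v2]] := Hy (u * r).
have E : 1 - r * (x + y) = (1 - r * x) * (1 - u * r * y).
  by rewrite mulrBr mulr1 !mulrA u2 mul1r mulrDr opprD addrA.
exists (v * u); rewrite E; split.
  by rewrite -mulrA (mulrA u) u1 mul1r v1.
by rewrite -mulrA (mulrA _ v) v2 mul1r u2.
Qed.

Lemma JmulR x t : jacobson x -> jacobson (x * t).
Proof.
move=> Hx r; have [u [u1 u2]] := Hx (t * r).
exists (1 + r * x * u * t); split.
- have -> : (1 + r * x * u * t) * (1 - r * (x * t)) =
            1 + r * x * (u * (1 - t * r * x) - 1) * t.
    rewrite !(mulrDl, mulrDr, mulrBl, mulrBr, mul1r, mulr1, mulrN, mulNr, mulrA, opprD, opprK).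
    by rewrite addrAC -addrA.
  by rewrite u1 subrr mulr0 mul0r addr0.
- have -> : (1 - r * (x * t)) * (1 + r * x * u * t) =
            1 + r * x * ((1 - t * r * x) * u - 1) * t.
    rewrite !(mulrDl, mulrDr, mulrBl, mulrBr, mul1r, mulr1, mulrN, mulNr, mulrA, opprD, opprK).
    by rewrite -!addrA; congr (_ + (_ + _)); rewrite addrC.
  by rewrite u2 subrr mulr0 mul0r addr0.
Qed.

Lemma tele x y z : (x - y) + (y - z) = x - z.
Proof. by rewrite addrA subrK. Qed.

Lemma Jtrans x y z : eqJ x y -> eqJ y z -> eqJ x z.
Proof. by rewrite /eqJ -(tele x y z); apply: JD. Qed.

Lemma Jsym x y : eqJ x y -> eqJ y x.
Proof. by move=> H; rewrite /eqJ -opprB; apply: JN. Qed.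

Lemma JrefL x : eqJ x x.
Proof. by rewrite /eqJ subrr; apply: J0. Qed.

Lemma JcongL c x y : eqJ x y -> eqJ (c * x) (c * y).
Proof. by rewrite /eqJ -mulrBr; apply: JmulL. Qed.

Lemma JcongR c x y : eqJ x y -> eqJ (x * c) (y * c).
Proof. by rewrite /eqJ -mulrBl; apply: JmulR. Qed.

Lemma Jcong1 x y : eqJ x y -> eqJ (1 - x) (1 - y).
Proof.
move=> H; rewrite /eqJ (_ : (1 - x) - (1 - y) = y - x); first exact: Jsym.
by rewrite opprB addrC addrA subrK.
Qed.

Lemma Jpow x y n : eqJ x y -> eqJ (x ^+ n) (y ^+ n).
Proof.
move=> H; elim: n => [|n IH]; first exact: JrefL.
rewrite /eqJ !exprSr.
rewrite (_ : x ^+ n * x - y ^+ n * y = x ^+ n * (x - y) + (x ^+ n - y ^+ n) * y).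
  by apply: JD; [apply: JmulL | apply: JmulR].
by rewrite mulrBr mulrBl tele.
Qed.

Definition cf (f : R) : commr_rmorph (intmul (1:R)) f := fun n => commr_int f n.
Local Notation hm f := (horner_morph (cf f)).
Lemma hX f : hm f 'X = f. Proof. by rewrite horner_morphX. Qed.
Lemma hD f p q : hm f (p + q) = hm f p + hm f q. Proof. exact: raddfD. Qed.
Lemma hB f p q : hm f (p - q) = hm f p - hm f q. Proof. exact: raddfB. Qed.
Lemma hM f p q : hm f (p * q) = hm f p * hm f q. Proof. exact: rmorphM. Qed.
Lemma hXn f p n : hm f (p ^+ n) = hm f p ^+ n. Proof. exact: rmorphXn. Qed.
Section Lift.
Variable f : R.
Local Notation hm := (hm f).

Lemma lift k (p : {poly int}) : hm (p * p - p) ^+ (2 ^ k) = 0 ->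
  exists q u s : {poly int}, hm q * hm q = hm q /\ hm q = hm (p * u * p) /\
     hm (q - p) = hm ((p * p - p) * s).
Proof.
elim: k p => [|k IH] p H.
  rewrite expn0 expr1 in H.
  rewrite hB in H.
  have E : hm (p * p) = hm p by apply/eqP; rewrite -subr_eq0 H.
  exists p, 1, 0; split; first by rewrite -[RHS]E hM.
  by split; [rewrite mulr1 E | rewrite subrr mulr0].
set p1 := p * p * (3 - 2 * p).
have E : (p1 * p1 - p1) ^+ (2 ^ k) =
   (p * p - p) ^+ (2 ^ k.+1) * (4 * (p * p - p) - 3) ^+ (2 ^ k).
  by rewrite expnS exprM -exprMn; congr (_ ^+ _); rewrite /p1; ring.
have H1 : hm (p1 * p1 - p1) ^+ (2 ^ k) = 0.
  by rewrite -hXn E hM hXn H mul0r.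
have [q [u [s [Hq1 [Hq2 Hq3]]]]] := IH p1 H1.
exists q, (p * (3 - 2 * p) * u * p * (3 - 2 * p)),
  ((p * p - p) * (4 * (p * p - p) - 3) * s - (2 * p - 1)).
split => //; split.
  by rewrite Hq2; congr hm; rewrite /p1; ring.
have -> : q - p = (q - p1) + (p1 - p) by rewrite addrA subrK.
by rewrite hD Hq3 -hD; congr hm; rewrite /p1; ring.
Qed.
End Lift.

End S.
Arguments cf {R}.
Arguments hX {R}.
Arguments hB {R}.
Arguments hM {R}.
Arguments hXn {R}.
Arguments lift {R f k p}.
Notation hm f := (horner_morph (cf f)).

Theorem lemma2p1 (R : nzRingType) :
  DRNC R <-> (DRNC_mod_J R /\ jacobson_nil R).
Proof.
split.
- move=> H; split.
    move=> a; have [e [[r Hr] [He [n Hn]]]] := H a.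
    exists e; split; first by exists r; rewrite Hr; apply: JrefL.
    split; first by rewrite He; apply: JrefL.
    by exists n; rewrite Hn; apply: JrefL.
  move=> x Jx; have [e [[r Hr] [He Hn]]] := H x.
  have E0 : e = 0.
    have [y [_ Hy]] := Jx (e * x * r).
    have Et : e * x * r * x = e by rewrite -[RHS]He [X in _ = _ * X]Hr !mulrA.
    rewrite Et in Hy.
    have Ee : e * (1 - e) = 0 by rewrite mulrBr mulr1 He subrr.
    by rewrite -[e]mulr1 -Hy mulrA Ee mul0r.
  by rewrite E0 subr0 mulr1 in Hn.
- move=> [HJ HN] a.
  have [e [[r Hr] [He [n Hn]]]] := HJ a.
  set f := a * r * a.
  have Jx : jacobson (f * f - f).
    have Ex : f * f - f = f * (f - e) + (f - e) * e + (e * e - e) + (e - f).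
      by rewrite mulrBr mulrBl !tele.
    have Jef : jacobson (e - f) by exact: Hr.
    have Jfe : jacobson (f - e) by rewrite -opprB; apply: JN.
    by rewrite Ex; apply: JD; [apply: JD; [apply: JD; [apply: JmulL|apply: JmulR]|] |].
  have [m Hm] := HN _ Jx.
  have Hlift : hm f (('X : {poly int}) * 'X - 'X) ^+ (2 ^ m) = 0.
    rewrite hB hM hX.
    have Hle : (m <= 2 ^ m)%N by apply: ltnW; apply: ltn_expl.
    by rewrite -(subnKC Hle) exprD Hm mul0r.
  have [q [u [s [Hq1 [Hq2 Hq3]]]]] := lift Hlift.
  exists (hm f q); split.
    exists (r * a * hm f u * a * r).
    by rewrite Hq2 !hM hX /f !mulrA.
  split; first exact: Hq1.
  have Hef : eqJ (hm f q) f.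
    by rewrite /eqJ -[X in _ - X](hX f) -hB Hq3 hM; apply: JmulR; rewrite hB hM hX.
  have Hee : eqJ (hm f q) e by apply: Jtrans Hef (Jsym Hr).
  have Hp : eqJ ((a * (1 - hm f q)) ^+ n) 0.
    apply: Jtrans Hn; apply: Jpow; apply: JcongL; exact: Jcong1.
  have [k Hk] := HN _ Hp.
  by exists (n * k)%N; rewrite exprM; rewrite subr0 in Hk.
Qed.
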